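(* Let $r\ge 2$ and let $G$ be an $r$-regular graph of order $n$ with $\mathrm{LIP}(G)=k$. Then $k\le \frac{rn-2}{2r-2}$.
   Context: All graphs are finite and simple. For a graph $G$, $\mathrm{LIP}(G)$ denotes the number of vertices of a longest induced path in $G$. The order of a graph is its number of vertices. *)

(* Defs.v *)
From mathcomp Require Import all_boot.
Set Implicit Arguments. Unset Strict Implicit. Unset Printing Implicit Defensive.

Definition simple_graph (T : finType) (e : rel T) : Prop :=
  symmetric e /\ irreflexive e.

Definition regular (T : finType) (e : rel T) (r : nat) : Prop :=
  forall v : T, #|[set w | e v w]| = r.

(* The vertex sequence s is an induced path of G: its vertices are pairwise
   distinct, and two vertices of s are adjacent iff they are consecutive in s.
   (The default element x0 of nth is irrelevant since indices are in range.) *)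
Definition induced_path (T : finType) (e : rel T) (s : seq T) : Prop :=
  uniq s /\
  forall (x0 : T) (i j : nat), i < size s -> j < size s ->
    e (nth x0 s i) (nth x0 s j) = (i.+1 == j) || (j.+1 == i).

Definition is_LIP (T : finType) (e : rel T) (k : nat) : Prop :=
  (exists s : seq T, induced_path e s /\ size s = k) /\
  (forall s : seq T, induced_path e s -> size s <= k).

(* Main.v *)
Require Import Defs.
From mathcomp Require Import all_boot.
From mathcomp Require Import zify.

Lemma cnt1 (m k : nat) : \sum_(j < k) (j == m :> nat) = (m < k).
Proof.
elim: k => [|k IH]; first by rewrite big_ord0.
rewrite big_ord_recr /= IH ltnS leq_eqVlt.
case: (ltngtP m k) => H; rewrite ?H /=; try lia.
Qed.

Lemma cnt2 (k : nat) : \sum_(i < k) (i.+1 < k) = k.-1.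
Proof.
case: k => [|k]; first by rewrite big_ord0.
rewrite big_ord_recr /= ltnn addn0.
rewrite (eq_bigr (fun _ => 1)); last by move=> i _; rewrite ltnS ltn_ord.
by rewrite sum_nat_const card_ord muln1.
Qed.

Lemma card_sum (T : finType) (A : {set T}) (P : pred T) :
  #|[set w in A | P w]| = \sum_(w in A) (P w : nat).
Proof.
rewrite -sum1_card big_mkcond [RHS]big_mkcond /=.
apply: eq_bigr => w _; rewrite !inE; by case: (w \in A); case: (P w).
Qed.

Lemma sum_seq (T : finType) (s : seq T) (x0 : T) (G : T -> nat) :
  uniq s -> \sum_(w in [set x in s]) G w = \sum_(i < size s) G (nth x0 s i).
Proof.
move=> us.
rewrite (eq_bigl (fun w => w \in s)); last by move=> w; rewrite inE.
by rewrite -big_uniq // (big_nth x0) big_mkord.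
Qed.

Theorem corollary1 (T : finType) (e : rel T) (r k : nat) :
  simple_graph e -> 0 < #|T| -> 2 <= r -> regular e r -> is_LIP e k ->
  k * (2 * r - 2) + 2 <= r * #|T|.
Proof.
move=> [sym irr] n0 r2 reg [[s [[us hs] ks]] _].
case: s us hs ks => [|x0 s'] us hs ks.
  rewrite -ks /= mul0n add0n; apply: (leq_trans r2).
  by rewrite -{1}(muln1 r) leq_mul2l n0 orbT.
set s := x0 :: s' in us hs ks.
set S := [set x in s].
have cS : #|S| = k by rewrite cardsE -ks; apply/card_uniqP.
have kn : k <= #|T| by rewrite -cS max_card.
have FA : \sum_(v in S) (#|[set w | e v w] :&: S| + #|[set w | e v w] :\: S|)
   = k * r.
  rewrite (eq_bigr (fun _ => r)); last by move=> v _; rewrite cardsID reg.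
  by rewrite sum_nat_const cS.
have FB : \sum_(v in S) #|[set w | e v w] :\: S| <= (#|T| - k) * r.
  rewrite (eq_bigr (fun v => \sum_(w in ~: S) (e v w : nat))); last first.
    move=> v _; rewrite -card_sum; apply: eq_card => w.
    by rewrite !inE andbC.
  rewrite exchange_big /=.
  apply: (@leq_trans (\sum_(w in ~: S) r)); last first.
    by rewrite sum_nat_const -cS -(cardsC S) addKn.
  apply: leq_sum => w _.
  rewrite (eq_bigr (fun v => (e w v : nat))); last by move=> v _; rewrite sym.
  rewrite -card_sum -(reg w); apply: subset_leq_card; apply/subsetP => v.
  by rewrite !inE => /andP [].
have FC : \sum_(v in S) #|[set w | e v w] :&: S| <= 2 * (k - 1).
  rewrite (eq_bigr (fun v => \sum_(w in S) (e v w : nat))); last first.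
    move=> v _; rewrite -card_sum; apply: eq_card => w.
    by rewrite !inE andbC.
  rewrite (@sum_seq _ _ x0 _ us).
  rewrite (eq_bigr (fun i : 'I_(size s) => \sum_(j < size s)
              (((i.+1 == j) || (j.+1 == i)) : nat))); last first.
    by move=> i _; rewrite (@sum_seq _ _ x0 _ us); apply: eq_bigr => j _;
       rewrite hs.
  apply: (@leq_trans (\sum_(i < size s) \sum_(j < size s)
              ((i.+1 == j : nat) + (j.+1 == i : nat)))).
    apply: leq_sum => i _; apply: leq_sum => j _.
    by case: (i.+1 == j); case: (j.+1 == i).
  rewrite (eq_bigr (fun i : 'I_(size s) => \sum_(j < size s) (i.+1 == j : nat)
      + \sum_(j < size s) (j.+1 == i : nat))); last by move=> i _; rewrite big_split.
  rewrite big_split /= [X in _ + X]exchange_big /=.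
  rewrite (eq_bigr (fun i : 'I_(size s) => (i.+1 < size s : nat))); last first.
    move=> i _; rewrite -cnt1; apply: eq_bigr => j _; by rewrite eq_sym.
  rewrite (eq_bigr (fun j : 'I_(size s) => (j.+1 < size s : nat))); last first.
    move=> j _; by rewrite -cnt1.
  rewrite cnt2 ks; lia.
rewrite big_split /= in FA.
have k1 : 1 <= k by rewrite -ks.
nia.
Qed.
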